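(* Let $b:\mathbb R\to\mathbb R$ be twice differentiable with $0<L_b\le b''(z)\le U_b$ for all $z$. Let $m\ge1$, $\lambda\in(0,1]$, $G>0$, $A>0$, let $t\ge3$ be an integer, let $\boldsymbol\theta_0\in\mathbb R^p$, let $\mathbf g_1,\dots,\mathbf g_{t-1},\mathbf u\in\mathbb R^p$ satisfy $\|\mathbf g_s\|_2\le G\sqrt m$ and $\|\mathbf u\|_2\le G\sqrt m$, let $r_1,\dots,r_{t-1}\in\mathbb R$ satisfy $\sum_{s=1}^{t-1}r_s^2\le A\,t\log t$, and let $\alpha=\sqrt t$. Define $$\mathcal L(\boldsymbol\theta)=\sum_{s=1}^{t-1}\Big(b(\langle\mathbf g_s,\boldsymbol\theta-\boldsymbol\theta_0\rangle)-r_s\langle\mathbf g_s,\boldsymbol\theta-\boldsymbol\theta_0\rangle\Big)+\frac{m\lambda}{2}\|\boldsymbol\theta-\boldsymbol\theta_0\|_2^2-\alpha\langle\mathbf u,\boldsymbol\theta-\boldsymbol\theta_0\rangle,$$ and the gradient-descent iterates $\boldsymbol\theta^{(0)}=\boldsymbol\theta_0$, $\boldsymbol\theta^{(j)}=\boldsymbol\theta^{(j-1)}-\eta\nabla\mathcal L(\boldsymbol\theta^{(j-1)})$ with $0<\eta\le(m\lambda+U_b\,t\,m\,G^2)^{-1}$. Then there is a constant $E>0$ depending only on $G,A,L_b,b(0),b'(0)$ such that for every $j\ge0$, $$\|\boldsymbol\theta^{(j)}-\boldsymbol\theta_0\|_2\le E\sqrt{\frac{t\log t}{m\lambda^2}}.$$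 *)

(* Defs.v *)
From Stdlib Require Import Reals Lra Lia.
From Coquelicot Require Import Coquelicot.
Open Scope R_scope.

Fixpoint sumR (n : nat) (f : nat -> R) : R :=
  match n with
  | O => 0
  | S n' => sumR n' f + f n'
  end.

(* Vectors of R^p are represented as nat -> R; only coordinates 0..p-1 matter. *)
Definition vec := nat -> R.

Definition inner (p : nat) (x y : vec) : R := sumR p (fun i => x i * y i).
Definition norm2 (p : nat) (x : vec) : R := sqrt (inner p x x).
Definition vsub (x y : vec) : vec := fun i => x i - y i.
Definition unitv (i : nat) : vec := fun k => if Nat.eqb k i then 1 else 0.

Definition grad (F : vec -> R) (th : vec) : vec :=
  fun i => Derive (fun h => F (fun k => th k + h * unitv i k)) 0.

Fixpoint gd (F : vec -> R) (eta : R) (th0 : vec) (j : nat) : vec :=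
  match j with
  | O => th0
  | S j' => let th := gd F eta th0 j' in fun i => th i - eta * grad F th i
  end.

(* The loss L(theta); the data g_s, r_s are indexed by s = 1..t-1. *)
Definition lossL (b : R -> R) (p t : nat) (th0 : vec) (g : nat -> vec) (r : nat -> R)
  (m lam alpha : R) (u : vec) (th : vec) : R :=
  sumR (t - 1) (fun k =>
    b (inner p (g (S k)) (vsub th th0)) - r (S k) * inner p (g (S k)) (vsub th th0))
  + m * lam / 2 * (norm2 p (vsub th th0)) ^ 2
  - alpha * inner p u (vsub th th0).

(* Main.v *)
Require Import Defs.
From Stdlib Require Import Reals Lra Lia.
From Coquelicot Require Import Coquelicot.
Open Scope R_scope.

Lemma der_cont (f : R -> R) (x l : R) : is_derive f x l -> continuity_pt f x.
Proof. intro H. apply (proj2 (continuity_pt_filterlim f x)). apply (ex_derive_continuous f x). exists l; exact H. Qed.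

Lemma mono_of_der (h1 h2 : R -> R) :
  (forall x, is_derive h1 x (h2 x)) -> (forall x, 0 <= h2 x) ->
  forall x y, x <= y -> h1 x <= h1 y.
Proof.
  intros D P x y Hxy.
  destruct (MVT_gen h1 x y h2) as [c [_ Hc]].
  - intros; apply D.
  - intros; eapply der_cont; apply D.
  - specialize (P c). nra.
Qed.

Lemma taylor0 (h h1 h2 : R -> R) :
  (forall x, is_derive h x (h1 x)) -> (forall x, is_derive h1 x (h2 x)) ->
  (forall x, 0 <= h2 x) -> h 0 = 0 -> h1 0 = 0 -> forall d, 0 <= h d.
Proof.
  intros D1 D2 P H0 H10 d.
  pose proof (mono_of_der h1 h2 D2 P) as M.
  destruct (MVT_gen h 0 d h1) as [c [Hc E]].
  - intros; apply D1.
  - intros; eapply der_cont; apply D1.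
  - destruct (Rle_dec 0 d) as [Hd|Hd].
    + rewrite Rmin_left in Hc by lra. rewrite Rmax_right in Hc by lra.
      assert (0 <= h1 c) by (rewrite <- H10; apply M; lra). nra.
    + rewrite Rmin_right in Hc by lra. rewrite Rmax_left in Hc by lra.
      assert (h1 c <= 0) by (rewrite <- H10; apply M; lra). nra.
Qed.

Lemma taylor_lower (b : R -> R) (Lb : R) :
  (forall z, ex_derive b z) -> (forall z, ex_derive (Derive b) z) ->
  (forall z, Lb <= Derive (Derive b) z) ->
  forall z d, b z + Derive b z * d + Lb * d ^ 2 / 2 <= b (z + d).
Proof.
  intros D1 D2 P z d.
  assert (0 <= (fun d => b (z + d) - (b z + Derive b z * d + Lb * d ^ 2 / 2)) d); [|simpl in *; lra].
  apply (taylor0 (fun d => b (z + d) - (b z + Derive b z * d + Lb * d ^ 2 / 2)) (fun d => Derive b (z + d) - Derive b z - Lb * d)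
                   (fun d => Derive (Derive b) (z + d) - Lb)).
  - intro x. auto_derive; [apply D1|]. change (fun x0 : R => b x0) with b. change RinvImpl.Rinv with Rinv. field.
  - intro x. auto_derive; [apply D2|]. change (fun x0 : R => Derive b x0) with (Derive b). change RinvImpl.Rinv with Rinv. field.
  - intro x. specialize (P (z + x)). lra.
  - rewrite Rplus_0_r. field.
  - rewrite Rplus_0_r. field.
Qed.

Lemma taylor_upper (b : R -> R) (Ub : R) :
  (forall z, ex_derive b z) -> (forall z, ex_derive (Derive b) z) ->
  (forall z, Derive (Derive b) z <= Ub) ->
  forall z d, b (z + d) <= b z + Derive b z * d + Ub * d ^ 2 / 2.
Proof.
  intros D1 D2 P z d.
  assert (0 <= (fun d => (b z + Derive b z * d + Ub * d ^ 2 / 2) - b (z + d)) d); [|simpl in *; lra].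
  apply (taylor0 (fun d => (b z + Derive b z * d + Ub * d ^ 2 / 2) - b (z + d)) (fun d => Derive b z + Ub * d - Derive b (z + d))
                   (fun d => Ub - Derive (Derive b) (z + d))).
  - intro x. auto_derive; [apply D1|]. change (fun x0 : R => b x0) with b. change RinvImpl.Rinv with Rinv. field.
  - intro x. auto_derive; [apply D2|]. change (fun x0 : R => Derive b x0) with (Derive b). change RinvImpl.Rinv with Rinv. field.
  - intro x. specialize (P (z + x)). lra.
  - rewrite Rplus_0_r. field.
  - rewrite Rplus_0_r. field.
Qed.

Lemma sumR_ext n f g : (forall k, (k < n)%nat -> f k = g k) -> sumR n f = sumR n g.
Proof. induction n; simpl; intros H; auto. rewrite IHn by (intros; apply H; lia). rewrite H by lia. auto. Qed.
Lemma sumR_plus n f g : sumR n (fun k => f k + g k) = sumR n f + sumR n g.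
Proof. induction n; simpl; [ring|rewrite IHn; ring]. Qed.
Lemma sumR_scal n c f : sumR n (fun k => c * f k) = c * sumR n f.
Proof. induction n; simpl; [ring|rewrite IHn; ring]. Qed.
Lemma sumR_le n f g : (forall k, (k < n)%nat -> f k <= g k) -> sumR n f <= sumR n g.
Proof. induction n; simpl; intros H; [lra|]. assert (sumR n f <= sumR n g) by (apply IHn; intros; apply H; lia). specialize (H n ltac:(lia)). lra. Qed.
Lemma sumR_const n c : sumR n (fun _ => c) = INR n * c.
Proof. induction n; [simpl; ring|]. cbn [sumR]. rewrite IHn, S_INR. ring. Qed.
Lemma sumR_swap n p (f : nat -> nat -> R) :
  sumR n (fun k => sumR p (fun i => f k i)) = sumR p (fun i => sumR n (fun k => f k i)).
Proof. induction n; simpl.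
  - induction p; simpl; [auto| rewrite <- IHp; ring].
  - rewrite IHn. rewrite <- sumR_plus. auto. Qed.

Lemma inner_ext p a a' x x' : (forall k, (k < p)%nat -> a k = a' k /\ x k = x' k) -> inner p a x = inner p a' x'.
Proof. intro H. unfold inner. apply sumR_ext. intros k Hk. destruct (H k Hk) as [-> ->]. auto. Qed.
Lemma inner_comm p x y : inner p x y = inner p y x.
Proof. unfold inner. apply sumR_ext. intros; ring. Qed.
Lemma inner_lin p a x c y : inner p a (fun i => x i + c * y i) = inner p a x + c * inner p a y.
Proof. unfold inner. rewrite <- sumR_scal, <- sumR_plus. apply sumR_ext; intros; ring. Qed.
Lemma inner_nonneg p x : 0 <= inner p x x.
Proof. unfold inner. induction p; simpl; [lra|]. nra. Qed.
Lemma norm2_sq p x : (norm2 p x) ^ 2 = inner p x x.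
Proof. unfold norm2. rewrite <- Rsqr_pow2. apply Rsqr_sqrt, inner_nonneg. Qed.
Lemma norm2_nonneg p x : 0 <= norm2 p x.
Proof. apply sqrt_pos. Qed.

Lemma inner_shift p a y h i :
  inner p a (fun k => y k + h * unitv i k) = inner p a y + h * (if Nat.ltb i p then a i else 0).
Proof.
  unfold inner, unitv. induction p; simpl; [ring|]. rewrite IHp.
  destruct (Nat.eqb p i) eqn:E.
  - apply Nat.eqb_eq in E; subst. replace (Nat.ltb i i) with false by (symmetry; apply Nat.ltb_ge; lia).
    replace (Nat.ltb i (S i)) with true by (symmetry; apply Nat.ltb_lt; lia). ring.
  - apply Nat.eqb_neq in E. destruct (Nat.ltb i p) eqn:E2.
    + apply Nat.ltb_lt in E2. replace (Nat.ltb i (S p)) with true by (symmetry; apply Nat.ltb_lt; lia). ring.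
    + apply Nat.ltb_ge in E2. replace (Nat.ltb i (S p)) with false by (symmetry; apply Nat.ltb_ge; lia). ring.
Qed.

Lemma CS p x y : (inner p x y) ^ 2 <= inner p x x * inner p y y.
Proof.
  assert (Q : forall l, 0 <= inner p x x - 2 * l * inner p x y + l ^ 2 * inner p y y).
  { intro l. pose proof (inner_nonneg p (fun i => x i + (- l) * y i)) as H.
    rewrite inner_lin in H. rewrite (inner_comm p (fun i => x i + - l * y i) x), (inner_comm p (fun i => x i + - l * y i) y) in H.
    rewrite !inner_lin in H. rewrite (inner_comm p y x) in H. nra. }
  pose proof (inner_nonneg p y) as Hy. pose proof (inner_nonneg p x) as Hx.
  destruct (Req_dec (inner p y y) 0) as [E|E].
  - destruct (Req_dec (inner p x y) 0) as [E2|E2]; [rewrite E2; nra|].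
    specialize (Q ((inner p x x + 1) / (2 * inner p x y))). rewrite E in Q.
    assert (2 * ((inner p x x + 1) / (2 * inner p x y)) * inner p x y = inner p x x + 1) by (field; auto).
    lra.
  - specialize (Q (inner p x y / inner p y y)).
    assert (0 < inner p y y) by lra.
    set (yy := inner p y y) in *. set (xy := inner p x y) in *. set (xx := inner p x x) in *.
    assert (2 * (xy / yy) * xy = 2 * (xy^2 / yy)) by (field; lra).
    assert ((xy / yy) ^ 2 * yy = xy^2 / yy) by (field; lra).
    assert (xy ^ 2 / yy * yy = xy ^ 2) by (field; lra).
    assert (0 <= (xx - xy ^ 2 / yy) * yy) by (apply Rmult_le_pos; lra).
    nra.
Qed.

Ltac rring := match goal with |- ?a = ?c => change (@eq R a c) end; try change RinvImpl.Rinv with Rinv; field.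

Lemma is_derive_sumR n (F : nat -> R -> R) dF x :
  (forall k, (k < n)%nat -> is_derive (F k) x (dF k)) ->
  is_derive (fun h => sumR n (fun k => F k h)) x (sumR n dF).
Proof.
  induction n; intro H; simpl.
  - apply (is_derive_const (K:=R_AbsRing) (V:=R_NormedModule) 0 x).
  - apply (is_derive_plus (K:=R_AbsRing) (V:=R_NormedModule) (fun h => sumR n (fun k => F k h)) (F n)).
    + apply IHn. intros; apply H; lia.
    + apply H; lia.
Qed.

Lemma isd_plus (f h : R -> R) x a c : is_derive f x a -> is_derive h x c -> is_derive (fun y => f y + h y) x (a + c).
Proof. intros; apply (is_derive_plus (K:=R_AbsRing) (V:=R_NormedModule) f h); auto. Qed.
Lemma isd_minus (f h : R -> R) x a c : is_derive f x a -> is_derive h x c -> is_derive (fun y => f y - h y) x (a - c).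
Proof. intros; apply (is_derive_minus (K:=R_AbsRing) (V:=R_NormedModule) f h); auto. Qed.
Lemma isd_val (f : R -> R) x a c : is_derive f x a -> a = c -> is_derive f x c.
Proof. intros H ->; auto. Qed.

Lemma grad_L (b : R -> R) (p t : nat) (th0 : vec) (g : nat -> vec) (r : nat -> R) (M lam al : R) (u th : vec) (i : nat) : (forall z, ex_derive b z) -> (i < p)%nat ->
  grad (lossL b p t th0 g r M lam al u) th i =
  sumR (t-1) (fun k => (Derive b (inner p (g (S k)) (vsub th th0)) - r (S k)) * g (S k) i)
  + M * lam * (th i - th0 i) - al * u i.
Proof.
  intros Db Hi. unfold grad. apply is_derive_unique.
  set (x := vsub th th0).
  set (Phi := fun h => sumR (t-1) (fun k => b (inner p (g (S k)) x + h * g (S k) i)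
                 - r (S k) * (inner p (g (S k)) x + h * g (S k) i))
              + M * lam / 2 * (inner p x x + 2 * h * x i + h ^ 2) - al * (inner p u x + h * u i)).
  assert (Hlt : Nat.ltb i p = true) by (apply Nat.ltb_lt; auto).
  assert (Hsh : forall a h, inner p a (vsub (fun k => th k + h * unitv i k) th0) = inner p a x + h * a i).
  { intros a h. transitivity (inner p a (fun k => x k + h * unitv i k)).
    - apply inner_ext. intros; split; auto. unfold x, vsub. ring.
    - rewrite inner_shift, Hlt. auto. }
  apply (is_derive_ext Phi).
  - intro h. unfold Phi, lossL. rewrite norm2_sq.
    rewrite Hsh, (inner_comm p (vsub _ th0) x), Hsh.
    assert (E : vsub (fun k => th k + h * unitv i k) th0 i = x i + h)
      by (unfold x, vsub, unitv; rewrite Nat.eqb_refl; ring).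
    rewrite E, Hsh.
    rewrite (sumR_ext _ (fun k => b (inner p (g (S k)) (vsub (fun k0 : nat => th k0 + h * unitv i k0) th0)) -
     r (S k) * inner p (g (S k)) (vsub (fun k0 : nat => th k0 + h * unitv i k0) th0))
       (fun k => b (inner p (g (S k)) x + h * g (S k) i) - r (S k) * (inner p (g (S k)) x + h * g (S k) i))).
    + match goal with |- ?a = ?c => change (@eq R a c) end; ring.
    + intros k _. rewrite Hsh. auto.
  - unfold Phi. eapply isd_val.
    + refine (isd_minus _ _ 0 (_ + M * lam * x i) (al * u i) (isd_plus _ _ 0 _ (M*lam*x i) _ _) _).
      * apply (is_derive_sumR _ _ (fun k => (Derive b (inner p (g (S k)) x) - r (S k)) * g (S k) i)).
        intros k _. auto_derive; [apply Db|].
        rewrite Rmult_0_l, Rplus_0_r. change (fun x0 : R => b x0) with b. rring.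
      * auto_derive; [exact I|]. rring.
      * auto_derive; [exact I|]. rring.
    + unfold x, vsub. rring.
Qed.

Lemma sumR_minus n f g : sumR n (fun k => f k - g k) = sumR n f - sumR n g.
Proof. induction n; simpl; [ring|rewrite IHn; ring]. Qed.

Lemma descent (b : R -> R) (Ub : R) (p t : nat) (th0 : vec) (g : nat -> vec) (r : nat -> R)
  (M lam al : R) (u th : vec) (GM2 eta : R) :
  (forall z, ex_derive b z) -> (forall z, ex_derive (Derive b) z) ->
  (forall z, Derive (Derive b) z <= Ub) -> 0 <= Ub -> 0 <= M * lam ->
  (forall k, (k < t - 1)%nat -> inner p (g (S k)) (g (S k)) <= GM2) ->
  0 < eta -> eta * (M * lam + Ub * INR (t - 1) * GM2) <= 1 ->
  let L := lossL b p t th0 g r M lam al u in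
  L (fun i => th i - eta * grad L th i) <= L th.
Proof.
  intros D1 D2 HU HU0 HML HG Heta Hstep L.
  set (v := grad L th). set (x := vsub th th0).
  set (th' := fun i => th i - eta * v i).
  set (c := fun k => Derive b (inner p (g (S k)) x) - r (S k)).
  set (w := fun k => inner p (g (S k)) v).
  assert (H1 : forall a, inner p a (vsub th' th0) = inner p a x - eta * inner p a v).
  { intro a. transitivity (inner p a (fun i => x i + (- eta) * v i)).
    - apply inner_ext; intros; split; auto. unfold th', x, vsub. ring.
    - rewrite inner_lin. ring. }
  assert (H2 : inner p (vsub th' th0) (vsub th' th0) = inner p x x - 2 * eta * inner p x v + eta ^ 2 * inner p v v).
  { rewrite H1, inner_comm, H1, (inner_comm p (vsub th' th0) v), H1, (inner_comm p v x). ring. }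
  set (V := inner p v v).
  assert (H3 : V = sumR (t - 1) (fun k => c k * w k) + M * lam * inner p x v - al * inner p u v).
  { unfold V, w. unfold inner at 1.
    transitivity (sumR p (fun i => sumR (t - 1) (fun k => c k * (g (S k) i * v i)) + M * lam * (x i * v i) - al * (u i * v i))).
    - apply sumR_ext. intros i Hi. unfold v at 2. unfold L. rewrite grad_L by auto.
      rewrite (sumR_ext _ (fun k => c k * (g (S k) i * v i)) (fun k => v i * ((Derive b (inner p (g (S k)) (vsub th th0)) - r (S k)) * g (S k) i))) by (intros; unfold c, x; ring).
      rewrite sumR_scal. unfold x, vsub. ring.
    - rewrite sumR_minus, sumR_plus, sumR_swap. unfold inner. rewrite <- !sumR_scal. do 2 f_equal.
      apply sumR_ext. intros k _. rewrite <- sumR_scal. auto. }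
  assert (HV : 0 <= V) by apply inner_nonneg.
  assert (H5 : sumR (t - 1) (fun k => w k ^ 2) <= INR (t - 1) * GM2 * V).
  { apply Rle_trans with (sumR (t-1) (fun _ => GM2 * V)); [|rewrite sumR_const; right; ring].
    apply sumR_le. intros k Hk. unfold w.
    pose proof (CS p (g (S k)) v). specialize (HG k Hk). fold V in H. nra. }
  assert (H4 : sumR (t - 1) (fun k => b (inner p (g (S k)) (vsub th' th0)) - r (S k) * inner p (g (S k)) (vsub th' th0))
     <= sumR (t - 1) (fun k => (b (inner p (g (S k)) x) - r (S k) * inner p (g (S k)) x)
                     + (- eta) * (c k * w k) + (Ub * eta ^ 2 / 2) * w k ^ 2)).
  { apply sumR_le. intros k _. rewrite H1. fold (w k).
    pose proof (taylor_upper b Ub D1 D2 HU (inner p (g (S k)) x) (- eta * w k)).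
    unfold c. replace (inner p (g (S k)) x - eta * w k) with (inner p (g (S k)) x + - eta * w k) by ring.
    nra. }
  rewrite !sumR_plus, !sumR_scal in H4.
  unfold L, lossL. fold th'. fold x. rewrite !norm2_sq, H2, H1. fold V.
  assert (Ub * sumR (t - 1) (fun k => w k ^ 2) <= Ub * (INR (t - 1) * GM2 * V)) by (apply Rmult_le_compat_l; auto).
  assert (eta * (eta * (M * lam + Ub * INR (t - 1) * GM2) * V) <= eta * V).
  { apply Rmult_le_compat_l; [lra|]. rewrite <- (Rmult_1_l V) at 2. apply Rmult_le_compat_r; auto. }
  assert (eta ^ 2 * (Ub * sumR (t - 1) (fun k => w k ^ 2)) <= eta ^ 2 * (Ub * (INR (t - 1) * GM2 * V))) by (apply Rmult_le_compat_l; [nra|auto]).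
  nra.
Qed.

Lemma inner_le_norm p x y : inner p x y <= norm2 p x * norm2 p y.
Proof.
  pose proof (CS p x y). rewrite <- !norm2_sq in H.
  pose proof (norm2_nonneg p x). pose proof (norm2_nonneg p y).
  assert (0 <= norm2 p x * norm2 p y) by nra. nra.
Qed.

Lemma inner_zero p a th0 : inner p a (vsub th0 th0) = 0.
Proof. unfold inner. rewrite (sumR_ext _ _ (fun _ => 0)). rewrite sumR_const; ring. intros; unfold vsub; ring. Qed.

Lemma lower (b : R -> R) (Lb b0 b1 : R) (p t : nat) (th0 : vec) (g : nat -> vec) (r : nat -> R)
  (M lam al : R) (u th : vec) :
  (forall z, ex_derive b z) -> (forall z, ex_derive (Derive b) z) ->
  (forall z, Lb <= Derive (Derive b) z) -> 0 < Lb -> b 0 = b0 -> Derive b 0 = b1 ->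
  sumR (t - 1) (fun _ => b0) - sumR (t - 1) (fun k => (b1 - r (S k)) ^ 2) / (2 * Lb)
  + M * lam / 2 * (norm2 p (vsub th th0)) ^ 2 - al * inner p u (vsub th th0)
  <= lossL b p t th0 g r M lam al u th.
Proof.
  intros D1 D2 HL HLb Hb0 Hb1. unfold lossL.
  assert (sumR (t - 1) (fun _ => b0) - sumR (t - 1) (fun k => (b1 - r (S k)) ^ 2) / (2 * Lb)
    <= sumR (t - 1) (fun k => b (inner p (g (S k)) (vsub th th0)) - r (S k) * inner p (g (S k)) (vsub th th0))).
  { unfold Rdiv. rewrite Rmult_comm, <- sumR_scal, <- sumR_minus. apply sumR_le. intros k _.
    set (z := inner p (g (S k)) (vsub th th0)).
    pose proof (taylor_lower b Lb D1 D2 HL 0 z). rewrite Rplus_0_l, Hb0, Hb1 in H.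
    assert (0 <= (Lb * z + (b1 - r (S k))) ^ 2 * / (2 * Lb)).
    { apply Rmult_le_pos; [apply pow2_ge_0|]. left; apply Rinv_0_lt_compat; lra. }
    assert ((Lb * z + (b1 - r (S k))) ^ 2 * / (2 * Lb) = Lb * z ^ 2 / 2 + (b1 - r (S k)) * z + / (2 * Lb) * (b1 - r (S k)) ^ 2) by (field; lra).
    nra. }
  lra.
Qed.

Theorem mainTheorem5 :
  forall (G A Lb b0 b1 : R), 0 < G -> 0 < A -> 0 < Lb ->
  exists E : R, 0 < E /\
  forall (b : R -> R) (Ub : R) (m t p : nat) (lam eta : R)
         (th0 : vec) (g : nat -> vec) (u : vec) (r : nat -> R),
    (forall z, ex_derive b z) ->
    (forall z, ex_derive (Derive b) z) ->
    (forall z, Lb <= Derive (Derive b) z <= Ub) ->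
    b 0 = b0 -> Derive b 0 = b1 ->
    (1 <= m)%nat -> 0 < lam <= 1 -> (3 <= t)%nat ->
    (forall s, (1 <= s <= t - 1)%nat -> norm2 p (g s) <= G * sqrt (INR m)) ->
    norm2 p u <= G * sqrt (INR m) ->
    sumR (t - 1) (fun k => (r (S k)) ^ 2) <= A * INR t * ln (INR t) ->
    0 < eta <= / (INR m * lam + Ub * INR t * INR m * G ^ 2) ->
    forall j : nat,
      norm2 p (vsub (gd (lossL b p t th0 g r (INR m) lam (sqrt (INR t)) u) eta th0 j) th0)
      <= E * sqrt (INR t * ln (INR t) / (INR m * lam ^ 2)).
Proof.
  intros G A Lb b0 b1 HG HA HLb.
  assert (Hl3 : 0 < ln 3) by (rewrite <- ln_1; apply ln_increasing; lra).
  set (l3 := ln 3) in *.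
  set (E2 := 4 * G ^ 2 / l3 + 4 * (b1 ^ 2 / l3 + A) / Lb).
  assert (HE2 : 0 < E2).
  { unfold E2. assert (0 < 4 * G ^ 2 / l3) by (apply Rdiv_lt_0_compat; nra).
    assert (0 < 4 * (b1 ^ 2 / l3 + A) / Lb); [|lra].
    apply Rdiv_lt_0_compat; [|lra]. assert (0 <= b1 ^ 2 / l3) by (apply Rdiv_le_0_compat; nra). lra. }
  exists (sqrt E2). split; [apply sqrt_lt_R0; auto|].
  intros b Ub m t p lam eta th0 g u r D1 D2 Hb Hb0 Hb1 Hm Hlam Ht Hg Hu Hr Heta j.
  set (M := INR m) in *. set (T := INR t) in *.
  assert (HM : 1 <= M) by (unfold M; replace 1 with (INR 1) by reflexivity; apply le_INR; auto).
  assert (HT : 3 <= T) by (unfold T; replace 3 with (INR 3) by (simpl; ring); apply le_INR; auto).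
  assert (HT1 : INR (t - 1) <= T) by (unfold T; apply le_INR; lia).
  assert (HT1' : 0 <= INR (t - 1)) by apply pos_INR.
  assert (HUb : Lb <= Ub) by (destruct (Hb 0); lra).
  set (L := lossL b p t th0 g r M lam (sqrt T) u).
  assert (Hdesc : forall j, L (gd L eta th0 j) <= L th0).
  { assert (HD : 0 < M * lam + Ub * T * M * G ^ 2).
    { assert (0 <= Ub * T * M * G ^ 2) by (repeat apply Rmult_le_pos; nra). nra. }
    assert (Hstep : eta * (M * lam + Ub * INR (t - 1) * (G ^ 2 * M)) <= 1).
    { apply Rle_trans with (eta * (M * lam + Ub * T * M * G ^ 2)).
      - apply Rmult_le_compat_l; [lra|].
        assert (Ub * INR (t - 1) * (G ^ 2 * M) <= Ub * T * M * G ^ 2); [|lra].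
        replace (Ub * T * M * G ^ 2) with ((Ub * (G ^ 2 * M)) * T) by ring.
        replace (Ub * INR (t - 1) * (G ^ 2 * M)) with ((Ub * (G ^ 2 * M)) * INR (t - 1)) by ring.
        apply Rmult_le_compat_l; auto. repeat apply Rmult_le_pos; nra.
      - destruct Heta as [He1 He2].
        apply Rmult_le_compat_r with (r := M * lam + Ub * T * M * G ^ 2) in He2; [|lra].
        rewrite Rinv_l in He2; lra. }
    induction j0.
    - simpl. lra.
    - eapply Rle_trans; [|exact IHj0]. simpl.
      apply (descent b Ub p t th0 g r M lam (sqrt T) u (gd L eta th0 j0) (G ^ 2 * M) eta); auto.
      + intro z; apply Hb.
      + lra.
      + nra.
      + intros k Hk. rewrite <- norm2_sq.
        assert (0 <= norm2 p (g (S k))) by apply norm2_nonneg.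
        assert (norm2 p (g (S k)) <= G * sqrt M) by (apply Hg; lia).
        assert ((G * sqrt M) ^ 2 = G ^ 2 * M) by (rewrite Rpow_mult_distr, pow2_sqrt; lra).
        nra.
      + lra. }
  specialize (Hdesc j). fold L.
  set (th := gd L eta th0 j) in *.
  set (N := norm2 p (vsub th th0)).
  assert (HN : 0 <= N) by apply norm2_nonneg.
  assert (Hlow := lower b Lb b0 b1 p t th0 g r M lam (sqrt T) u th D1 D2 (fun z => proj1 (Hb z)) HLb Hb0 Hb1).
  assert (HL0 : L th0 = sumR (t - 1) (fun _ => b0)).
  { unfold L, lossL. rewrite norm2_sq, !inner_zero.
    rewrite (sumR_ext _ _ (fun _ => b0)); [ring|]. intros k _. rewrite inner_zero, Hb0. ring. }
  set (SS := sumR (t - 1) (fun k => (b1 - r (S k)) ^ 2)) in *.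
  fold L in Hlow. fold N in Hlow.
  assert (Hun : inner p u (vsub th th0) <= G * sqrt M * N).
  { eapply Rle_trans; [apply inner_le_norm|]. apply Rmult_le_compat_r; auto. }
  set (ell := ln T).
  assert (Hell : l3 <= ell).
  { unfold ell, l3. destruct (Req_dec T 3) as [->|Hne]; [lra|]. left; apply ln_increasing; lra. }
  assert (HS : SS <= 2 * T * b1 ^ 2 + 2 * A * T * ell).
  { unfold SS. apply Rle_trans with (sumR (t - 1) (fun k => 2 * b1 ^ 2 + 2 * (r (S k)) ^ 2)).
    - apply sumR_le. intros k _. pose proof (pow2_ge_0 (b1 + r (S k))). nra.
    - rewrite sumR_plus, sumR_scal, sumR_const, sumR_scal. fold T in Hr. fold ell in Hr.
      assert (0 <= b1 ^ 2) by apply pow2_ge_0. assert (0 <= (T - INR (t - 1)) * b1 ^ 2) by (apply Rmult_le_pos; lra). nra. }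
  set (s := sqrt T). set (q := sqrt M).
  assert (Hs2 : s ^ 2 = T) by (apply pow2_sqrt; lra).
  assert (Hq2 : q ^ 2 = M) by (apply pow2_sqrt; lra).
  assert (Hs : 0 <= s) by apply sqrt_pos. assert (Hq : 0 <= q) by apply sqrt_pos.
  assert (HSL : SS / (2 * Lb) <= (T * b1 ^ 2 + A * T * ell) / Lb).
  { unfold Rdiv. apply Rle_trans with ((2 * T * b1 ^ 2 + 2 * A * T * ell) * / (2 * Lb)).
    - apply Rmult_le_compat_r; auto. left; apply Rinv_0_lt_compat; lra.
    - right. field. lra. }
  set (C := T * b1 ^ 2 + A * T * ell) in *.
  assert (HC : 0 <= C) by (unfold C; apply Rplus_le_le_0_compat; [apply Rmult_le_pos; [lra|apply pow2_ge_0] | repeat apply Rmult_le_pos; lra]).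
  assert (HCL : 0 <= C / Lb) by (apply Rdiv_le_0_compat; lra).
  assert (Hk1 : M * lam / 2 * N ^ 2 <= s * (G * q * N) + C / Lb).
  { assert (s * inner p u (vsub th th0) <= s * (G * q * N)) by (apply Rmult_le_compat_l; auto).
    fold s in Hlow. lra. }
  assert (Hk2 : 4 * lam * (s * (G * q * N)) <= M * lam ^ 2 * N ^ 2 + 4 * G ^ 2 * T).
  { assert (0 <= (q * lam * N - 2 * G * s) ^ 2) by apply pow2_ge_0.
    rewrite <- Hq2, <- Hs2. nra. }
  assert (Hk3 : M * lam ^ 2 * N ^ 2 <= 4 * G ^ 2 * T + 4 * (C / Lb)).
  { assert (lam * (M * lam / 2 * N ^ 2) <= lam * (s * (G * q * N) + C / Lb)) by (apply Rmult_le_compat_l; lra).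
    assert (lam * (C / Lb) <= C / Lb) by nra. nra. }
  assert (Hk4 : 4 * G ^ 2 * T + 4 * (C / Lb) <= E2 * (T * ell)).
  { assert (Hr1 : 1 <= ell / l3) by (apply Rle_div_r; lra).
    assert (E2 * (T * ell) = (ell / l3) * (4 * G ^ 2 * T) + 4 * (((ell / l3) * (T * b1 ^ 2)) + A * T * ell) / Lb)
      by (unfold E2; field; lra).
    rewrite H. unfold C.
    assert (T * b1 ^ 2 <= (ell / l3) * (T * b1 ^ 2)) by (assert (0 <= T * b1 ^ 2) by nra; nra).
    assert (4 * G ^ 2 * T <= (ell / l3) * (4 * G ^ 2 * T)) by (assert (0 <= 4 * G ^ 2 * T) by nra; nra).
    assert (4 * ((T * b1 ^ 2 + A * T * ell) / Lb) <= 4 * ((ell / l3 * (T * b1 ^ 2) + A * T * ell) / Lb)).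
    { unfold Rdiv. apply Rmult_le_compat_l; [lra|]. apply Rmult_le_compat_r; [left; apply Rinv_0_lt_compat; lra|]. lra. }
    unfold Rdiv in *. lra. }
  assert (HML : 0 < M * lam ^ 2) by nra.
  rewrite <- sqrt_mult_alt by lra.
  rewrite <- (sqrt_pow2 N) by auto. apply sqrt_le_1_alt.
  assert (N ^ 2 = (M * lam ^ 2 * N ^ 2) / (M * lam ^ 2)) by (field; lra).
  rewrite H. unfold Rdiv. rewrite <- Rmult_assoc.
  apply Rmult_le_compat_r; [left; apply Rinv_0_lt_compat; lra|]. fold ell. lra.
Qed.
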